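(* Suppose $\Delta(x,\varepsilon)$ is not independent of $x$. Let $r\ge1$ be the smallest index such that $\Delta_r$ is a nonconstant function, so that $$\Delta(x,\varepsilon)=A(\varepsilon)+\Delta_r(x)\varepsilon^r+o(\varepsilon^r),$$ where $A(\varepsilon)$ is a polynomial in $\varepsilon$ of degree at most $r-1$ with constant coefficients. Then $\Delta_r$ is periodic with period $\mu$, that is, $$\Delta_r(x+\mu)=\Delta_r(x)\quad\text{for all }x\in\mathbb R.$$
   Context: Fix integers $p$ and $q\ge1$ and put $\mu=2\pi p/q$. Let $f:\mathbb R\to\mathbb R$ be a $2\pi$-periodic real-analytic function. For real parameters $\varepsilon,\delta$ set $g(x)=-\delta-\varepsilon f(x)$ and consider the map $T_{\varepsilon,\delta}(x,y)=(x+y+\mu+g(x),\;y+g(x))$ on $\mathbb R^2$. Define ${}_nR$ and ${}_nS$ by $T^n_{\varepsilon,\delta}(x_0,y_0)=(x_0+n\mu+{}_nR,\;y_0+{}_nS)$. There exist $\bar{\bar\varepsilon},\eta>0$ and real-analytic functions $\Delta(x,\varepsilon)$ and $Y(x,\varepsilon)$, defined for $x\in\mathbb R$ and $|\varepsilon|<\bar{\bar\varepsilon}$ and vanishing at $\varepsilon=0$, such that $(\delta,y)=(\Delta(x,\varepsilon),Y(x,\varepsilon))$ is the unique solution with $|\delta|,|y|<\eta$ of ${}_qR(x,y,\varepsilon,\delta)={}_qS(x,y,\varepsilon,\delta)=0$. Write $\Delta(x,\varepsilon)=\sum_{n\ge1}\Delta_n(x)\varepsilon^n$. *)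

(* Defs.v *)
From Stdlib Require Import Reals ZArith.
From Coquelicot Require Import Coquelicot.
Open Scope R_scope.

Definition rot_number (p : Z) (q : nat) : R := 2 * PI * IZR p / INR q.

Definition Tmap (mu : R) (f : R -> R) (eps delta : R) (z : R * R) : R * R :=
  let g := - delta - eps * f (fst z) in
  (fst z + snd z + mu + g, snd z + g).

Definition Titer (mu : R) (f : R -> R) (eps delta : R) (n : nat) (z : R * R) : R * R :=
  Nat.iter n (Tmap mu f eps delta) z.

Definition nR (mu : R) (f : R -> R) (n : nat) (x y eps delta : R) : R :=
  fst (Titer mu f eps delta n (x, y)) - x - INR n * mu.
Definition nS (mu : R) (f : R -> R) (n : nat) (x y eps delta : R) : R :=
  snd (Titer mu f eps delta n (x, y)) - y.

Definition real_analytic1 (f : R -> R) : Prop :=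
  forall x0, exists rho, 0 < rho /\ exists a : nat -> R,
    forall x, Rabs (x - x0) < rho -> is_pseries a (x - x0) (f x).

Definition real_analytic2 (F : R -> R -> R) (U : R -> R -> Prop) : Prop :=
  forall x0 e0, U x0 e0 -> exists rho, 0 < rho /\ exists a : nat -> nat -> R,
    forall x e, Rabs (x - x0) < rho -> Rabs (e - e0) < rho ->
      (forall n, ex_series (fun m => Rabs (a n m) * Rabs (x - x0) ^ m * Rabs (e - e0) ^ n))
      /\ ex_series (fun n => Series (fun m => Rabs (a n m) * Rabs (x - x0) ^ m * Rabs (e - e0) ^ n))
      /\ F x e = Series (fun n => Series (fun m => a n m * (x - x0) ^ m * (e - e0) ^ n)).

(* Main.v *)
Require Import Defs.
From Stdlib Require Import Reals ZArith Lra Lia.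
From Coquelicot Require Import Coquelicot.
Open Scope R_scope.

Lemma sum_abs_ge (a : nat -> R) N n : (n <= N)%nat ->
  Rabs (a n) <= sum_f_R0 (fun k => Rabs (a k)) N.
Proof.
  induction N; intros H.
  - assert (n = 0%nat) by lia; subst; simpl; lra.
  - destruct (Nat.eq_dec n (S N)).
    + subst. simpl. assert (0 <= sum_f_R0 (fun k => Rabs (a k)) N).
      { apply cond_pos_sum. intros; apply Rabs_pos. } lra.
    + simpl. assert (Rabs (a n) <= sum_f_R0 (fun k => Rabs (a k)) N) by (apply IHN; lia).
      pose proof (Rabs_pos (a (S N))). lra.
Qed.

Lemma bounded_ex (a : nat -> R) : ex_series a -> exists M, forall n, Rabs (a n) <= M.
Proof.
  intros H. apply ex_series_lim_0 in H. apply is_lim_seq_spec in H.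
  destruct (H (mkposreal 1 Rlt_0_1)) as [N HN].
  exists (1 + sum_f_R0 (fun k => Rabs (a k)) N). intros n.
  assert (0 <= sum_f_R0 (fun k => Rabs (a k)) N).
  { apply cond_pos_sum. intros; apply Rabs_pos. }
  destruct (le_lt_dec N n) as [l|l].
  - specialize (HN n l). simpl in HN. rewrite Rminus_0_r in HN. lra.
  - assert (Rabs (a n) <= sum_f_R0 (fun k => Rabs (a k)) N) by (apply sum_abs_ge; lia). lra.
Qed.

Lemma uniq_coef (c d : nat -> R) (G : R -> R) rho : 0 < rho ->
  (forall e, Rabs e < rho -> is_series (fun n => c n * e^n) (G e) /\
                              is_series (fun n => d n * e^n) (G e)) ->
  forall n, c n = d n.
Proof.
  intros Hr H n.
  assert (Hrad : forall c', (forall e, Rabs e < rho -> is_series (fun n => c' n * e^n) (G e)) ->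
            Rbar_lt 0 (CV_radius c')).
  { intros c' Hc'.
    assert (Hb : exists M, forall n, Rabs (c' n * (rho/2)^n) <= M).
    { apply bounded_ex. eexists. apply Hc'. rewrite Rabs_pos_eq; lra. }
    pose proof (CV_radius_bounded c') as [Hub _].
    specialize (Hub (rho/2) Hb).
    destruct (CV_radius c'); simpl in *; auto; lra. }
  apply PSeries_ext_recip.
  - apply Hrad. intros; apply H; auto.
  - apply Hrad. intros; apply H; auto.
  - exists (mkposreal rho Hr). intros y Hy.
    assert (Rabs y < rho).
    { unfold ball in Hy; simpl in Hy. unfold AbsRing_ball in Hy. unfold abs, minus, plus, opp in Hy; simpl in Hy.
      rewrite Ropp_0, Rplus_0_r in Hy. exact Hy. }
    destruct (H y H0) as [H1 H2].
    rewrite (is_pseries_unique c y (G y)), (is_pseries_unique d y (G y)); auto;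
    apply is_pseries_R; auto.
Qed.

Lemma iter_comm {A} (g : A -> A) n z : Nat.iter n g (g z) = g (Nat.iter n g z).
Proof. induction n; simpl; congruence. Qed.

Lemma fper_nat (f : R -> R) (Hf : forall x, f (x + 2 * PI) = f x) : forall n x, f (x + 2 * PI * INR n) = f x.
Proof.
  induction n; intros x.
  - simpl. rewrite Rmult_0_r, Rplus_0_r; auto.
  - rewrite S_INR. replace (x + 2 * PI * (INR n + 1)) with ((x + 2*PI*INR n) + 2*PI) by ring.
    rewrite Hf; auto.
Qed.

Lemma fper_Z (f : R -> R) (Hf : forall x, f (x + 2 * PI) = f x) : forall p x, f (x + 2 * PI * IZR p) = f x.
Proof.
  intros p x. destruct (Z_le_gt_dec 0 p).
  - rewrite <- (Z2Nat.id p) by lia. rewrite <- INR_IZR_INZ. apply fper_nat; auto.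
  - replace p with (- Z.of_nat (Z.to_nat (- p)))%Z by lia.
    rewrite opp_IZR, <- INR_IZR_INZ.
    set (k := Z.to_nat (-p)).
    rewrite <- (fper_nat f Hf k (x + 2 * PI * - INR k)). f_equal. ring.
Qed.

Lemma tail_eq (a b : nat -> R) F r V W : is_series a F -> is_series b F ->
  (forall n, (n < r)%nat -> a n = b n) ->
  is_series (fun k => a (k + r)%nat) V -> is_series (fun k => b (k + r)%nat) W -> V = W.
Proof.
  intros Ha Hb Hab HV HW.
  pose proof (is_series_minus _ _ _ _ Ha Hb) as Hd.
  pose proof (is_series_minus _ _ _ _ HV HW) as Ht.
  set (d := fun n => plus (a n) (opp (b n))) in *.
  assert (Hd0 : forall n, (n < r)%nat -> d n = 0).
  { intros n Hn. unfold d. rewrite Hab by auto. unfold plus, opp; simpl. ring. }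
  assert (E : plus F (opp F) = 0) by (unfold plus, opp; simpl; ring).
  rewrite E in Hd.
  destruct r as [|r].
  - apply is_series_unique in Hd. 
    assert (Series (fun k => d (k + 0)%nat) = 0).
    { rewrite <- Hd. apply Series_ext. intros; rewrite Nat.add_0_r; auto. }
    apply is_series_unique in Ht. unfold plus, opp in Ht; simpl in Ht.
    assert (V + - W = 0) by (rewrite <- Ht; exact H). lra.
  - assert (Hs : sum_n d (Init.Nat.pred (S r)) = 0).
    { rewrite sum_n_Reals. simpl.
      assert (forall N, (N <= r)%nat -> sum_f_R0 d N = 0).
      { induction N; intros HN; simpl. apply Hd0. lia. rewrite IHN by lia. rewrite Hd0 by lia. ring. }
      apply H; lia. }
    assert (Hd' : is_series d (plus 0 (sum_n d (Init.Nat.pred (S r))))).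
    { rewrite Hs. replace (plus 0 0) with 0 by (unfold plus; simpl; ring). auto. }
    apply (is_series_incr_n d (S r) 0) in Hd'; [|lia].
    apply is_series_unique in Hd'. apply is_series_unique in Ht.
    assert (Series (fun k => d (k + S r)%nat) = 0).
    { rewrite <- Hd'. apply Series_ext. intros; f_equal; lia. }
    unfold plus, opp in Ht; simpl in Ht.
    assert (V + - W = 0) by (rewrite <- Ht; exact H). lra.
Qed.

Lemma Series_nonneg (a : nat -> R) : (forall n, 0 <= a n) -> ex_series a -> 0 <= Series a.
Proof.
  intros H He.
  assert (Series (fun _ => 0) = 0).
  { rewrite (Series_ext _ (fun n => 0 * 1)) by (intros; ring). rewrite Series_scal_l. ring. }
  rewrite <- H0. apply Series_le; auto. intros; split; [lra|auto].
Qed.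

Definition RAloc (F : R -> R -> R) x0 rho (a : nat -> nat -> R) := forall u e,
  Rabs u < rho -> Rabs e < rho ->
  (forall n, ex_series (fun m => Rabs (a n m) * Rabs u ^ m * Rabs e ^ n)) /\
  ex_series (fun n => Series (fun m => Rabs (a n m) * Rabs u ^ m * Rabs e ^ n)) /\
  F (x0 + u) e = Series (fun n => Series (fun m => a n m * u ^ m * e ^ n)).

Definition Bc (a : nat -> nat -> R) n u := Series (fun m => a n m * u ^ m).
Definition cc (a : nat -> nat -> R) s n := Series (fun m => Rabs (a n m) * s ^ m).

Lemma setup F x0 rho a s : RAloc F x0 rho a -> 0 < s < rho ->
  (forall n, ex_series (fun m => Rabs (a n m) * s ^ m)) /\
  exists M, forall n, cc a s n * s ^ n <= M.
Proof.
  intros H Hs.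
  assert (Ha : Rabs s < rho) by (rewrite Rabs_pos_eq; lra).
  destruct (H s s Ha Ha) as [Hn [Ho _]].
  rewrite Rabs_pos_eq in Hn, Ho by lra.
  assert (Hex : forall n, ex_series (fun m => Rabs (a n m) * s ^ m)).
  { intros n. apply (ex_series_ext (fun m => Rabs (a n m) * s ^ m * s ^ n * / s ^ n)).
    - intros m. assert (E : forall x y : R, y <> 0 -> x * y * / y = x) by (intros; field; auto). apply E. apply pow_nonzero; lra.
    - apply ex_series_scal_r. apply Hn. }
  split; auto.
  assert (He : ex_series (fun n => cc a s n * s ^ n)).
  { eapply ex_series_ext; [|exact Ho]. intros n. simpl.
    unfold cc. rewrite <- Series_scal_r. reflexivity. }
  destruct (bounded_ex _ He) as [M HM].
  exists M. intros n. specialize (HM n). eapply Rle_trans; [apply Rle_abs|exact HM].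
Qed.

Lemma absB (a : nat -> nat -> R) s n u : 0 < s ->
  ex_series (fun m => Rabs (a n m) * s ^ m) -> Rabs u <= s ->
  ex_series (fun m => Rabs (a n m * u ^ m)) /\
  Series (fun m => Rabs (a n m * u ^ m)) <= cc a s n.
Proof.
  intros Hs He Hu.
  assert (Ht : forall m, 0 <= Rabs (a n m * u ^ m) <= Rabs (a n m) * s ^ m).
  { intros m. split; [apply Rabs_pos|]. rewrite Rabs_mult, <- RPow_abs.
    apply Rmult_le_compat_l; [apply Rabs_pos|]. apply pow_incr. split; auto; apply Rabs_pos. }
  split.
  - apply (@ex_series_le _ R_CompleteNormedModule _ (fun m => Rabs (a n m) * s ^ m)); auto.
    intros m. change (norm (Rabs (a n m * u ^ m))) with (Rabs (Rabs (a n m * u ^ m))).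
    rewrite Rabs_Rabsolu. apply Ht.
  - apply Series_le; auto.
Qed.

Lemma cc_nonneg a s n : 0 < s -> ex_series (fun m => Rabs (a n m) * s ^ m) -> 0 <= cc a s n.
Proof.
  intros Hs He. apply Series_nonneg; auto. intros m.
  apply Rmult_le_pos; [apply Rabs_pos|apply pow_le; lra].
Qed.

Lemma Bbound a s n u : 0 < s ->
  ex_series (fun m => Rabs (a n m) * s ^ m) -> Rabs u <= s ->
  Rabs (Bc a n u) <= cc a s n.
Proof.
  intros Hs He Hu. destruct (absB a s n u Hs He Hu) as [H1 H2].
  unfold Bc. eapply Rle_trans; [apply Series_Rabs; auto|auto].
Qed.

Lemma Bdev a s n u : 0 < s ->
  ex_series (fun m => Rabs (a n m) * s ^ m) -> Rabs u <= s ->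
  Rabs (Bc a n u - a n 0%nat) <= Rabs u / s * cc a s n.
Proof.
  intros Hs He Hu. destruct (absB a s n u Hs He Hu) as [H1 H2].
  assert (Hex : ex_series (fun m => a n m * u ^ m)) by (apply ex_series_Rabs; auto).
  unfold Bc. rewrite Series_incr_1 by auto. simpl pow at 1.
  replace (a n 0%nat * 1 + Series (fun k => a n (S k) * u ^ S k) - a n 0%nat)
    with (Series (fun k => a n (S k) * u ^ S k)) by ring.
  assert (H1' : ex_series (fun k => Rabs (a n (S k) * u ^ S k))).
  { apply (ex_series_incr_1 (fun m => Rabs (a n m * u ^ m))). auto. }
  eapply Rle_trans; [apply Series_Rabs; auto|].
  assert (Hes : ex_series (fun k => Rabs (a n (S k)) * s ^ S k)).
  { apply (ex_series_incr_1 (fun m => Rabs (a n m) * s ^ m)). auto. }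
  eapply Rle_trans.
  - apply (Series_le _ (fun k => Rabs u / s * (Rabs (a n (S k)) * s ^ S k))).
    + intros k. split; [apply Rabs_pos|].
      rewrite Rabs_mult, <- RPow_abs. simpl.
      assert (Rabs u ^ k <= s ^ k) by (apply pow_incr; split; auto; apply Rabs_pos).
      assert (0 <= Rabs (a n (S k))) by apply Rabs_pos.
      assert (0 <= Rabs u) by apply Rabs_pos.
      replace (Rabs u / s * (Rabs (a n (S k)) * (s * s ^ k))) with
        (Rabs (a n (S k)) * Rabs u * s ^ k) by (field; lra).
      replace (Rabs (a n (S k)) * (Rabs u * Rabs u ^ k)) with
        (Rabs (a n (S k)) * Rabs u * Rabs u ^ k) by ring.
      apply Rmult_le_compat_l; auto. apply Rmult_le_pos; auto.
    + apply ex_series_scal_l with (c := Rabs u / s) in Hes. exact Hes.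
  - rewrite Series_scal_l. apply Rmult_le_compat_l.
    + apply Rmult_le_pos; [apply Rabs_pos|]. apply Rlt_le, Rinv_0_lt_compat; auto.
    + unfold cc. rewrite (Series_incr_1 (fun m => Rabs (a n m) * s ^ m)) by auto.
      simpl pow. rewrite Rmult_1_r. pose proof (Rabs_pos (a n 0%nat)). lra.
Qed.

Lemma M_nonneg a s M : 0 < s -> (forall n, ex_series (fun m => Rabs (a n m) * s ^ m)) ->
  (forall n, cc a s n * s ^ n <= M) -> 0 <= M.
Proof.
  intros Hs He HM. specialize (HM 0%nat). pose proof (cc_nonneg a s 0 Hs (He 0%nat)).
  simpl in HM. lra.
Qed.

Lemma tailL a s M u e r : 0 < s -> (forall n, ex_series (fun m => Rabs (a n m) * s ^ m)) ->
  (forall n, cc a s n * s ^ n <= M) -> Rabs u <= s -> Rabs e <= s / 2 ->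
  ex_series (fun k => Bc a (k + r) u * e ^ k) /\
  Rabs (Series (fun k => Bc a (k + r) u * e ^ k) - a r 0%nat) <=
    Rabs u / s * cc a s r + 2 * M / s ^ r * (Rabs e / s).
Proof.
  intros Hs He HM Hu Hee.
  pose proof (M_nonneg a s M Hs He HM) as HM0.
  set (qq := Rabs e / s).
  assert (Hq : 0 <= qq <= 1/2).
  { unfold qq. split. apply Rmult_le_pos; [apply Rabs_pos|apply Rlt_le, Rinv_0_lt_compat; lra].
    apply (Rmult_le_reg_r s); [lra|]. unfold Rdiv. rewrite Rmult_assoc, Rinv_l by lra. lra. }
  assert (Hsr : 0 < s ^ r) by (apply pow_lt; lra).
  assert (Hterm : forall k, Rabs (Bc a (k + r) u * e ^ k) <= M / s ^ r * qq ^ k).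
  { intros k. rewrite Rabs_mult, <- RPow_abs.
    assert (Hsk : 0 < s ^ k) by (apply pow_lt; lra).
    assert (Hc : cc a s (k + r) <= M / s ^ (k + r)).
    { specialize (HM (k + r)%nat). apply (Rmult_le_reg_r (s ^ (k + r))); [apply pow_lt; lra|].
      unfold Rdiv. rewrite Rmult_assoc, Rinv_l by (apply pow_nonzero; lra). lra. }
    pose proof (Bbound a s (k + r) u Hs (He _) Hu).
    assert (0 <= Rabs e ^ k) by (apply pow_le, Rabs_pos).
    eapply Rle_trans. apply Rmult_le_compat_r; [auto|]. eapply Rle_trans; [exact H|exact Hc].
    unfold qq. unfold Rdiv. rewrite Rpow_mult_distr, pow_inv, pow_add.
    right. field. split; lra. }
  assert (Hgeo : forall c, ex_series (fun k => c * qq ^ k)).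
  { intros c. assert (Hg : ex_series (fun k => qq ^ k)).
    { eexists. apply is_series_geom. rewrite Rabs_pos_eq; lra. }
    apply (ex_series_scal_l c) in Hg. exact Hg. }
  assert (Habs : ex_series (fun k => Rabs (Bc a (k + r) u * e ^ k))).
  { apply (@ex_series_le _ R_CompleteNormedModule _ (fun k => M / s ^ r * qq ^ k)); auto.
    intros k. change (norm (Rabs (Bc a (k + r) u * e ^ k))) with (Rabs (Rabs (Bc a (k + r) u * e ^ k))).
    rewrite Rabs_Rabsolu. auto. }
  assert (Hex : ex_series (fun k => Bc a (k + r) u * e ^ k)) by (apply ex_series_Rabs; auto).
  split; auto.
  rewrite Series_incr_1 by auto. simpl (0 + r)%nat. rewrite pow_O, Rmult_1_r.
  set (T := Series (fun k => Bc a (S k + r) u * e ^ S k)).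
  assert (HT : Rabs T <= 2 * M / s ^ r * qq).
  { assert (Habs1 : ex_series (fun k => Rabs (Bc a (S k + r) u * e ^ S k))).
    { apply (ex_series_incr_1 (fun k => Rabs (Bc a (k + r) u * e ^ k))). auto. }
    unfold T. eapply Rle_trans; [apply Series_Rabs; auto|].
    eapply Rle_trans.
    - apply (Series_le _ (fun k => M / s ^ r * qq * qq ^ k)).
      + intros k. split; [apply Rabs_pos|]. eapply Rle_trans; [apply (Hterm (S k))|].
        right. simpl. ring.
      + apply Hgeo.
    - rewrite Series_scal_l.
      assert (Hs1 : Series (fun k => qq ^ k) = / (1 - qq)).
      { apply is_series_unique. apply is_series_geom. rewrite Rabs_pos_eq; lra. }
      change (Series (pow qq)) with (Series (fun k => qq ^ k)). rewrite Hs1.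
      assert (0 <= M / s ^ r * qq).
      { apply Rmult_le_pos; [|lra]. apply Rmult_le_pos; [auto|]. apply Rlt_le, Rinv_0_lt_compat; auto. }
      assert (/ (1 - qq) <= 2).
      { apply (Rmult_le_reg_r (1 - qq)); [lra|]. rewrite Rinv_l by lra. lra. }
      replace (2 * M / s ^ r * qq) with (M / s ^ r * qq * 2) by (field; lra).
      apply Rmult_le_compat_l; auto. }
  pose proof (Bdev a s r u Hs (He r) Hu).
  replace (Bc a r u + T - a r 0%nat) with ((Bc a r u - a r 0%nat) + T) by ring.
  eapply Rle_trans; [apply Rabs_triang|]. fold qq. lra.
Qed.

Lemma Lser F x0 rho a s M u e : RAloc F x0 rho a -> 0 < s < rho ->
  (forall n, ex_series (fun m => Rabs (a n m) * s ^ m)) ->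
  (forall n, cc a s n * s ^ n <= M) -> Rabs u <= s -> Rabs e <= s / 2 ->
  is_series (fun n => Bc a n u * e ^ n) (F (x0 + u) e).
Proof.
  intros H Hs He HM Hu Hee.
  destruct (H u e) as [_ [_ HF]]; try lra.
  destruct (tailL a s M u e 0 (proj1 Hs) He HM Hu Hee) as [Hex _].
  assert (Hex' : ex_series (fun n => Bc a n u * e ^ n)).
  { eapply ex_series_ext; [|exact Hex]. intros k. simpl. rewrite Nat.add_0_r. reflexivity. }
  rewrite HF.
  rewrite (Series_ext _ (fun n => Bc a n u * e ^ n)).
  - apply Series_correct; auto.
  - intros n. unfold Bc. rewrite <- Series_scal_r. reflexivity.
Qed.

Lemma cont0 F x0 rho a : RAloc F x0 rho a -> 0 < rho -> F x0 0 = 0 ->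
  exists K, 0 <= K /\ forall e, Rabs e <= rho / 4 -> Rabs (F x0 e) <= K * Rabs e.
Proof.
  intros H Hr H0.
  set (s := rho / 2).
  assert (Hs : 0 < s < rho) by (unfold s; lra).
  destruct (setup F x0 rho a s H Hs) as [He [M HM]].
  pose proof (M_nonneg a s M (proj1 Hs) He HM) as HM0.
  assert (Hu : Rabs 0 <= s) by (rewrite Rabs_R0; lra).
  assert (Hgen : forall e, Rabs e <= s / 2 ->
     Rabs (F x0 e - a 0%nat 0%nat) <= 2 * M / s * Rabs e).
  { intros e Hee.
    pose proof (Lser F x0 rho a s M 0 e H Hs He HM Hu Hee) as HL.
    destruct (tailL a s M 0 e 0 (proj1 Hs) He HM Hu Hee) as [_ Hb].
    rewrite Rabs_R0 in Hb. simpl pow in Hb.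
    rewrite Rplus_0_r in HL. apply is_series_unique in HL.
    rewrite (Series_ext _ (fun n => Bc a n 0 * e ^ n)) in Hb
      by (intros; rewrite Nat.add_0_r; reflexivity).
    rewrite HL in Hb. 
    replace (2 * M / s * Rabs e) with (0 / s * cc a s 0 + 2 * M / 1 * (Rabs e / s)) by (field; lra).
    exact Hb. }
  assert (Ha : a 0%nat 0%nat = 0).
  { assert (Hz : Rabs 0 <= s / 2) by (rewrite Rabs_R0; lra).
    specialize (Hgen 0 Hz). rewrite H0, Rabs_R0, Rmult_0_r in Hgen.
    pose proof (Rabs_pos (0 - a 0%nat 0%nat)).
    assert (Rabs (0 - a 0%nat 0%nat) = 0) by lra.
    apply Rabs_eq_0 in H2. lra. }
  exists (2 * M / s). split.
  - apply Rmult_le_pos; [lra|]. apply Rlt_le, Rinv_0_lt_compat; lra.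
  - intros e Hee. specialize (Hgen e ltac:(unfold s; lra)). rewrite Ha, Rminus_0_r in Hgen. exact Hgen.
Qed.

Lemma RA_of F (U : R -> R -> Prop) x0 : real_analytic2 F U -> U x0 0 ->
  exists rho a, 0 < rho /\ RAloc F x0 rho a.
Proof.
  intros H Hu. destruct (H x0 0 Hu) as [rho [Hr [a Ha]]]. exists rho, a; split; auto.
  intros u e Hu' He'. specialize (Ha (x0 + u) e).
  replace (x0 + u - x0) with u in Ha by ring. rewrite Rminus_0_r in Ha. apply Ha; auto.
Qed.

Lemma B0 a s n : 0 < s -> ex_series (fun m => Rabs (a n m) * s ^ m) -> Bc a n 0 = a n 0%nat.
Proof.
  intros Hs He. assert (Hu : Rabs 0 <= s) by (rewrite Rabs_R0; lra).
  pose proof (Bdev a s n 0 Hs He Hu). rewrite Rabs_R0 in H.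
  replace (0 / s * cc a s n) with 0 in H by (field; lra).
  pose proof (Rabs_pos (Bc a n 0 - a n 0%nat)).
  assert (Rabs (Bc a n 0 - a n 0%nat) = 0) by lra. apply Rabs_eq_0 in H1. lra.
Qed.

Lemma ev_and (P Q : R -> Prop) :
  (exists d, 0 < d /\ forall e, 0 <= e <= d -> P e) ->
  (exists d, 0 < d /\ forall e, 0 <= e <= d -> Q e) ->
  exists d, 0 < d /\ forall e, 0 <= e <= d -> P e /\ Q e.
Proof.
  intros [d1 [H1 P1]] [d2 [H2 P2]]. exists (Rmin d1 d2). split.
  - apply Rmin_glb_lt; auto.
  - intros e He. pose proof (Rmin_l d1 d2). pose proof (Rmin_r d1 d2).
    split; [apply P1|apply P2]; lra.
Qed.

Lemma ev_lt b : 0 < b -> exists d, 0 < d /\ forall e, 0 <= e <= d -> e < b.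
Proof. intros Hb. exists (b / 2). split; [lra|]. intros; lra. Qed.

Lemma ev_le b : 0 < b -> exists d, 0 < d /\ forall e, 0 <= e <= d -> e <= b.
Proof. intros Hb. exists b. split; [lra|]. intros; lra. Qed.

Lemma ev_mul C b : 0 <= C -> 0 < b -> exists d, 0 < d /\ forall e, 0 <= e <= d -> C * e < b.
Proof.
  intros HC Hb. exists (b / (C + 1)). split.
  - apply Rdiv_lt_0_compat; lra.
  - intros e He. assert (C * e <= C * (b / (C + 1))) by (apply Rmult_le_compat_l; lra).
    assert (C * (b / (C + 1)) < b).
    { apply (Rmult_lt_reg_r (C + 1)); [lra|]. unfold Rdiv.
      replace (C * (b * / (C + 1)) * (C + 1)) with (C * b) by (field; lra). nra. }
    lra.
Qed.
Theorem lemma2 (p : Z) (q : nat) (f : R -> R)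
  (Hq : (1 <= q)%nat)
  (Hfper : forall x, f (x + 2 * PI) = f x)
  (Hfan : real_analytic1 f)
  (epsb eta : R) (Heps : 0 < epsb) (Heta : 0 < eta)
  (Delta Y : R -> R -> R) (Deltan : nat -> R -> R)
  (HDan : real_analytic2 Delta (fun _ e => Rabs e < epsb))
  (HYan : real_analytic2 Y (fun _ e => Rabs e < epsb))
  (HD0 : forall x, Delta x 0 = 0)
  (HY0 : forall x, Y x 0 = 0)
  (Hsol : forall x e, Rabs e < epsb ->
     Rabs (Delta x e) < eta /\ Rabs (Y x e) < eta /\
     nR (rot_number p q) f q x (Y x e) e (Delta x e) = 0 /\
     nS (rot_number p q) f q x (Y x e) e (Delta x e) = 0)
  (Huniq : forall x e delta y, Rabs e < epsb -> Rabs delta < eta -> Rabs y < eta ->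
     nR (rot_number p q) f q x y e delta = 0 ->
     nS (rot_number p q) f q x y e delta = 0 ->
     delta = Delta x e /\ y = Y x e)
  (Hexp : forall x, exists rho, 0 < rho /\
     forall e, Rabs e < rho -> is_series (fun n => Deltan n x * e ^ n) (Delta x e))
  (Hnonind : exists x1 x2 e, Rabs e < epsb /\ Delta x1 e <> Delta x2 e)
  (r : nat) (Hr1 : (1 <= r)%nat)
  (Hrnc : exists x1 x2, Deltan r x1 <> Deltan r x2)
  (Hrmin : forall n, (n < r)%nat -> forall x1 x2, Deltan n x1 = Deltan n x2) :
  forall x, Deltan r (x + rot_number p q) = Deltan r x.
Proof.
  intros x.
  set (mu := rot_number p q).
  assert (Hqmu : INR q * mu = 2 * PI * IZR p).
  { unfold mu, rot_number. field. apply not_0_INR. lia. }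
  assert (Hkey : forall e, Rabs e < epsb -> Rabs (Y x e - Delta x e - e * f x) < eta ->
     Delta (x + mu + (Y x e - Delta x e - e * f x)) e = Delta x e).
  { intros e He Hy'. destruct (Hsol x e He) as [Hd [Hy [HR HS]]].
    fold mu in HR, HS.
    set (y := Y x e) in *. set (d := Delta x e) in *.
    unfold nR, nS in HR, HS.
    assert (Hit : Titer mu f e d q (x, y) = (x + INR q * mu, y)).
    { destruct (Titer mu f e d q (x,y)) as [X1 Y1] eqn:E. simpl in HR, HS. f_equal; lra. }
    assert (Hit2 : Titer mu f e d q (x + mu + (y - d - e * f x), y - d - e * f x) =
                   (x + mu + (y - d - e * f x) + INR q * mu, y - d - e * f x)).
    { replace (x + mu + (y - d - e * f x), y - d - e * f x) with (Tmap mu f e d (x, y))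
        by (unfold Tmap; simpl; f_equal; ring).
      unfold Titer. rewrite iter_comm. fold (Titer mu f e d q (x, y)). rewrite Hit.
      unfold Tmap; simpl. rewrite Hqmu, fper_Z by auto. f_equal; ring. }
    symmetry. apply (Huniq _ e d (y - d - e * f x)); auto.
    - unfold nR. fold mu. rewrite Hit2. simpl. ring.
    - unfold nS. fold mu. rewrite Hit2. simpl. ring. }
  assert (Hz : Rabs 0 < epsb) by (rewrite Rabs_R0; lra).
  destruct (RA_of Delta _ x HDan Hz) as [rho1 [a1 [Hro1 H1]]].
  destruct (RA_of Delta _ (x + mu) HDan Hz) as [rho2 [a2 [Hro2 H2]]].
  destruct (RA_of Y _ x HYan Hz) as [rho3 [a3 [Hro3 H3]]].
  destruct (cont0 Delta x rho1 a1 H1 Hro1 (HD0 x)) as [K1 [HK1 Hc1]].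
  destruct (cont0 Y x rho3 a3 H3 Hro3 (HY0 x)) as [K3 [HK3 Hc3]].
  set (s1 := rho1 / 2). set (s2 := rho2 / 2).
  assert (Hs1 : 0 < s1 < rho1) by (unfold s1; lra).
  assert (Hs2 : 0 < s2 < rho2) by (unfold s2; lra).
  destruct (setup Delta x rho1 a1 s1 H1 Hs1) as [He1 [M1 HM1]].
  destruct (setup Delta (x + mu) rho2 a2 s2 H2 Hs2) as [He2 [M2 HM2]].
  pose proof (M_nonneg a1 s1 M1 (proj1 Hs1) He1 HM1) as HM10.
  pose proof (M_nonneg a2 s2 M2 (proj1 Hs2) He2 HM2) as HM20.
  assert (C1 : forall n, Bc a1 n 0 = Deltan n x).
  { destruct (Hexp x) as [rx [Hrx Hx]].
    apply (uniq_coef _ _ (fun e => Delta x e) (Rmin (s1 / 2) rx)).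
    - apply Rmin_glb_lt; lra.
    - intros e He. pose proof (Rmin_l (s1/2) rx). pose proof (Rmin_r (s1/2) rx). split.
      + assert (Hu : Rabs 0 <= s1) by (rewrite Rabs_R0; lra).
        pose proof (Lser Delta x rho1 a1 s1 M1 0 e H1 Hs1 He1 HM1 Hu ltac:(lra)) as HL.
        rewrite Rplus_0_r in HL. exact HL.
      + apply Hx. lra. }
  assert (C2 : forall u, Rabs u <= s2 -> forall n, Bc a2 n u = Deltan n (x + mu + u)).
  { intros u Hu. destruct (Hexp (x + mu + u)) as [rx [Hrx Hx]].
    apply (uniq_coef _ _ (fun e => Delta (x + mu + u) e) (Rmin (s2 / 2) rx)).
    - apply Rmin_glb_lt; lra.
    - intros e He. pose proof (Rmin_l (s2/2) rx). pose proof (Rmin_r (s2/2) rx). split.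
      + exact (Lser Delta (x + mu) rho2 a2 s2 M2 u e H2 Hs2 He2 HM2 Hu ltac:(lra)).
      + apply Hx. lra. }
  assert (EL : a1 r 0%nat = Deltan r x).
  { rewrite <- (B0 a1 s1 r (proj1 Hs1) (He1 r)). apply C1. }
  assert (EL0 : a2 r 0%nat = Deltan r (x + mu)).
  { rewrite <- (B0 a2 s2 r (proj1 Hs2) (He2 r)).
    rewrite C2 by (rewrite Rabs_R0; lra). rewrite Rplus_0_r; auto. }
  destruct (Req_dec (Deltan r (x + mu)) (Deltan r x)) as [Heq|Hne]; [exact Heq|exfalso].
  set (L := Deltan r x) in *. set (L0 := Deltan r (x + mu)) in *.
  set (eps := Rabs (L0 - L) / 3).
  assert (Heps0 : 0 < eps).
  { unfold eps. assert (0 < Rabs (L0 - L)) by (apply Rabs_pos_lt; intro Hc; apply Hne; lra). lra. }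
  set (Kt := K3 + K1 + Rabs (f x)).
  assert (HKt : 0 <= Kt) by (unfold Kt; pose proof (Rabs_pos (f x)); lra).
  set (D1 := 2 * M1 / s1 ^ r / s1).
  assert (HD1 : 0 <= D1).
  { unfold D1. assert (0 < s1 ^ r) by (apply pow_lt; lra).
    apply Rmult_le_pos; [apply Rmult_le_pos|]; [lra| |]; apply Rlt_le, Rinv_0_lt_compat; lra. }
  pose proof (cc_nonneg a2 s2 r (proj1 Hs2) (He2 r)) as Hcc2.
  set (D2 := Kt * cc a2 s2 r / s2 + 2 * M2 / s2 ^ r / s2).
  assert (HD2 : 0 <= D2).
  { unfold D2. assert (0 < s2 ^ r) by (apply pow_lt; lra).
    assert (0 < / s2) by (apply Rinv_0_lt_compat; lra).
    assert (0 < / s2 ^ r) by (apply Rinv_0_lt_compat; lra).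
    unfold Rdiv. apply Rplus_le_le_0_compat; repeat apply Rmult_le_pos; lra. }
  assert (Hd : exists d, 0 < d /\ forall e, 0 <= e <= d ->
     ((e < epsb /\ e <= rho1 / 4) /\ (e <= rho3 / 4 /\ e <= s1 / 2)) /\
     ((e <= s2 / 2 /\ Kt * e < eta) /\ (Kt * e < s2 /\ (D1 * e < eps /\ D2 * e < eps)))).
  { repeat apply ev_and; first [apply ev_lt; lra | apply ev_le; lra | apply ev_mul; lra]. }
  destruct Hd as [e [He0 Hd]]. destruct (Hd e ltac:(lra)) as [[[Ha1 Ha2] [Ha3 Ha4]] [[Ha5 Ha6] [Ha7 [Ha8 Ha9]]]].
  clear Hd.
  assert (Hs1n : s1 <> 0) by lra. assert (Hs2n : s2 <> 0) by lra.
  assert (Hs1r : s1 ^ r <> 0) by (apply pow_nonzero; lra).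
  assert (Hs2r : s2 ^ r <> 0) by (apply pow_nonzero; lra).
  assert (Hae : Rabs e = e) by (apply Rabs_pos_eq; lra).
  set (y' := Y x e - Delta x e - e * f x).
  assert (Hy' : Rabs y' <= Kt * e).
  { unfold y'. specialize (Hc1 e ltac:(lra)). specialize (Hc3 e ltac:(lra)).
    rewrite Hae in Hc1, Hc3.
    eapply Rle_trans; [apply Rabs_triang|].
    rewrite Rabs_Ropp, Rabs_mult, Hae.
    eapply Rle_trans; [apply Rplus_le_compat_r; unfold Rminus; apply Rabs_triang|].
    rewrite Rabs_Ropp. unfold Kt. assert (T1: Rabs (Y x e) + Rabs (Delta x e) <= K3*e + K1*e) by lra. replace ((K3 + K1 + Rabs (f x)) * e) with (K3*e + K1*e + e*Rabs (f x)) by ring. apply Rplus_le_compat_r. exact T1. }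
  assert (Hk : Delta (x + mu + y') e = Delta x e) by (apply Hkey; [rewrite Hae; lra | fold y'; lra]).
  assert (Hee1 : Rabs e <= s1 / 2) by lra.
  assert (Hee2 : Rabs e <= s2 / 2) by lra.
  assert (Hu0 : Rabs 0 <= s1) by (rewrite Rabs_R0; lra).
  assert (Hu2 : Rabs y' <= s2) by lra.
  pose proof (Lser Delta x rho1 a1 s1 M1 0 e H1 Hs1 He1 HM1 Hu0 Hee1) as S1.
  rewrite Rplus_0_r in S1.
  pose proof (Lser Delta (x + mu) rho2 a2 s2 M2 y' e H2 Hs2 He2 HM2 Hu2 Hee2) as S2.
  rewrite Hk in S2.
  destruct (tailL a1 s1 M1 0 e r (proj1 Hs1) He1 HM1 Hu0 Hee1) as [T1 B1].
  destruct (tailL a2 s2 M2 y' e r (proj1 Hs2) He2 HM2 Hu2 Hee2) as [T2 B2].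
  set (V1 := Series (fun k => Bc a1 (k + r) 0 * e ^ k)) in *.
  set (V2 := Series (fun k => Bc a2 (k + r) y' * e ^ k)) in *.
  assert (Hsh : forall (b : nat -> R) V, is_series (fun k => b k * e ^ k) V ->
            is_series (fun k => b k * e ^ (k + r)) (V * e ^ r)).
  { intros b V HV. apply (is_series_scal_r (e ^ r)) in HV.
    eapply is_series_ext; [|exact HV]. intros k. simpl. rewrite pow_add. ring. }
  assert (EV : V1 * e ^ r = V2 * e ^ r).
  { apply (tail_eq (fun n => Bc a1 n 0 * e ^ n) (fun n => Bc a2 n y' * e ^ n) (Delta x e) r); auto.
    - intros n Hn. rewrite C1, C2 by auto. rewrite (Hrmin n Hn x (x + mu + y')). reflexivity.
    - apply (Hsh (fun k => Bc a1 (k + r) 0)). apply Series_correct; auto.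
    - apply (Hsh (fun k => Bc a2 (k + r) y')). apply Series_correct; auto. }
  assert (EV' : V1 = V2).
  { apply (Rmult_eq_reg_r (e ^ r)); auto. apply pow_nonzero; lra. }
  rewrite Rabs_R0, EL in B1. rewrite EL0 in B2. fold L in B1. fold L0 in B2.
  assert (B1' : Rabs (V1 - L) < eps).
  { eapply Rle_lt_trans; [exact B1|]. rewrite Hae.
    replace (0 / s1 * cc a1 s1 r + 2 * M1 / s1 ^ r * (e / s1)) with (D1 * e)
      by (unfold D1; field; auto). lra. }
  assert (B2' : Rabs (V2 - L0) < eps).
  { eapply Rle_lt_trans; [exact B2|]. rewrite Hae.
    assert (Rabs y' / s2 * cc a2 s2 r <= Kt * e / s2 * cc a2 s2 r).
    { apply Rmult_le_compat_r; auto. unfold Rdiv. apply Rmult_le_compat_r; auto.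
      apply Rlt_le, Rinv_0_lt_compat; lra. }
    replace (D2 * e) with (Kt * e / s2 * cc a2 s2 r + 2 * M2 / s2 ^ r * (e / s2)) in Ha9
      by (unfold D2; field; auto). lra. }
  assert (Rabs (L0 - L) <= Rabs (V2 - L0) + Rabs (V1 - L)).
  { replace (L0 - L) with (-(V2 - L0) + (V1 - L)) by (rewrite EV'; ring).
    eapply Rle_trans; [apply Rabs_triang|]. rewrite Rabs_Ropp. lra. }
  unfold eps in *. lra.
Qed.
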